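(* Let $X,Y$ be complex Banach spaces, let $\mathcal B$ be any family of compact subsets of $X$ such that every $x\in X$ belongs to some $B\in\mathcal B$, let $f:\mathbb R^n\to\mathbb C$ be Bohr almost periodic and let $F:\mathbb R^n\times X\to Y$ be Bohr $\mathcal B$-almost periodic. Then $F_1(\mathbf t;x):=f(\mathbf t)F(\mathbf t;x)$, $\mathbf t\in\mathbb R^n$, $x\in X$, is Bohr $\mathcal B$-almost periodic.
   Context: A continuous $f:\mathbb R^n\to\mathbb C$ is Bohr almost periodic if for every $\epsilon>0$ there is $l>0$ such that every closed ball of radius $l$ in $\mathbb R^n$ contains a $\tau$ with $|f(\mathbf t+\tau)-f(\mathbf t)|\le\epsilon$ for all $\mathbf t$. A continuous $F:\mathbb R^n\times X\to Y$ is Bohr $\mathcal B$-almost periodic if for every $B\in\mathcal B$ and $\epsilon>0$ there exists $l>0$ such that for each $\mathbf t_0\in\mathbb R^n$ there exists $\tau$ with $|\tau-\mathbf t_0|\le l$ and $\|F(\mathbf t+\tau;x)-F(\mathbf t;x)\|_Y\le\epsilon$ for all $\mathbf t\in\mathbb R^n$, $x\in B$. *)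

(* Defs.v *)
From HB Require Import structures.
From mathcomp Require Import all_boot all_order all_algebra.
From mathcomp Require Import all_classical all_reals all_analysis.
From mathcomp Require Import complex.
Set Implicit Arguments. Unset Strict Implicit. Unset Printing Implicit Defensive.
Import Order.TTheory GRing.Theory Num.Theory.
Import numFieldTopology.Exports numFieldNormedType.Exports.

(* Equip C := R[i] with its canonical (modulus-induced) topology and its
   structure of normed module over itself, as analysis does for numFieldTypes
   via the R^o alias. *)
HB.instance Definition _ (R : rcfType) := PseudoPointedMetric.copy R[i] (R[i])^o.
HB.instance Definition _ (R : rcfType) := NormedModule.copy R[i] (R[i])^o.
Local Open Scope classical_set_scope.
Local Open Scope ring_scope.

Definition eucl_norm {R : realType} {n : nat} (v : 'rV[R]_n) : R :=
  Num.sqrt (\sum_(i < n) (v ord0 i) ^+ 2).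

Definition bohr_ap {R : realType} {n : nat} (f : 'rV[R]_n -> R[i]) : Prop :=
  continuous f /\
  forall eps : R, 0 < eps -> exists l : R, 0 < l /\
    forall t0 : 'rV[R]_n, exists tau : 'rV[R]_n,
      eucl_norm (tau - t0) <= l /\
      forall t : 'rV[R]_n, `|f (t + tau) - f t| <= (eps%:C)%C.

Definition bohr_B_ap {R : realType} {n : nat}
    {X Y : normedModType R[i]} (BB : set (set X))
    (F : 'rV[R]_n * X -> Y) : Prop :=
  continuous F /\
  forall B, BB B -> forall eps : R, 0 < eps -> exists l : R, 0 < l /\
    forall t0 : 'rV[R]_n, exists tau : 'rV[R]_n,
      eucl_norm (tau - t0) <= l /\
      forall t : 'rV[R]_n, forall x : X, B x ->
        `|F (t + tau, x) - F (t, x)| <= (eps%:C)%C.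

(* Main.v *)
Require Import Defs.
From HB Require Import structures.
From mathcomp Require Import all_boot all_order all_algebra.
From mathcomp Require Import all_classical all_reals all_analysis.
From mathcomp Require Import complex.
Import Order.TTheory GRing.Theory Num.Theory.
Import numFieldTopology.Exports numFieldNormedType.Exports.
Local Open Scope classical_set_scope.
Local Open Scope ring_scope.
Section Aux.
Context {R : realType}.

Lemma normE {V : normedModType R[i]} (y : V) : `|y| = (complex.Re `|y|)%:C%C.
Proof.
have h := ger0_Im (normr_ge0 y).
by case: `|y| h => a b /= ->.
Qed.

Lemma nr_ge0 {V : normedModType R[i]} (y : V) : 0 <= complex.Re `|y|.
Proof. by rewrite -ler0c -normE. Qed.

Lemma nr_le {V : normedModType R[i]} (y : V) (e : R) :
  (`|y| <= e%:C%C) = (complex.Re `|y| <= e).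
Proof. by rewrite {1}normE lecR. Qed.

Lemma nr_lt {V : normedModType R[i]} (y : V) (e : R) :
  (`|y| < e%:C%C) = (complex.Re `|y| < e).
Proof. by rewrite {1}normE ltcR. Qed.

Lemma nr_D {V : normedModType R[i]} (x y : V) :
  complex.Re `|x + y| <= complex.Re `|x| + complex.Re `|y|.
Proof.
by rewrite -lecR rmorphD /= -!normE ler_normD.
Qed.

Lemma nr_Z {V : normedModType R[i]} (a : R[i]) (y : V) :
  complex.Re `|a *: y| = complex.Re `|a| * complex.Re `|y|.
Proof.
apply: complexI; rewrite -normE normrZ rmorphM /=.
by rewrite -!normE.
Qed.

Lemma nr_distC {V : normedModType R[i]} (x y : V) :
  complex.Re `|x - y| = complex.Re `|y - x|.
Proof. by rewrite distrC. Qed.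

Lemma nr_B {V : normedModType R[i]} (x y z : V) :
  complex.Re `|x - z| <= complex.Re `|x - y| + complex.Re `|y - z|.
Proof. have -> : x - z = (x - y) + (y - z) by rewrite addrA subrK.
exact: nr_D. Qed.

End Aux.
From mathcomp Require Import lra.
Section Mx.
Context {R : realType}.
Context {n : nat}.
Implicit Types v : 'rV[R]_n.

Lemma coord_le v i : `|v ord0 i| <= `|v|.
Proof.
rewrite [leRHS]/Num.norm /= mx_normrE.
by apply: (le_trans _ (le_bigmax _ _ (ord0, i))).
Qed.

Lemma mxnorm_le v e : 0 <= e -> (forall i, `|v ord0 i| <= e) -> `|v| <= e.
Proof.
move=> e0 H; rewrite [leLHS]/Num.norm /= mx_normrE.
apply/bigmax_leP; split => // -[a b] _ /=.
by rewrite (ord1 a); exact: H.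
Qed.

Lemma mx_le_eucl v : `|v| <= eucl_norm v.
Proof.
apply: mxnorm_le; first exact: sqrtr_ge0.
move=> i; rewrite -sqrtr_sqr /eucl_norm ler_sqrt; last first.
  by apply: sumr_ge0 => j _; exact: sqr_ge0.
by rewrite (bigD1 i) //= lerDl; apply: sumr_ge0 => j _; exact: sqr_ge0.
Qed.

Lemma eucl_le_mx v : eucl_norm v <= n%:R * `|v|.
Proof.
have h0 : 0 <= n%:R * `|v| by rewrite mulr_ge0.
rewrite -(ger0_norm h0) -sqrtr_sqr /eucl_norm ler_sqrt; last exact: sqr_ge0.
apply: (le_trans (y := \sum_(i < n) `|v| ^+ 2)).
  apply: ler_sum => i _; rewrite -real_normK ?num_real //.
  have h1 := coord_le v i; have h2 := normr_ge0 (v ord0 i).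
  rewrite !expr2; nra.
rewrite sumr_const card_ord -[_ *+ n]mulr_natl.
have hn : (n%:R : R) = 0 \/ 1 <= (n%:R : R).
  by case: n => [|m]; [left | right; rewrite ler1n].
have hv := normr_ge0 v.
rewrite !expr2; case: hn => [->|hn]; first nra.
have h3 : 0 <= (n%:R - 1) * (n%:R * (`|v| * `|v|)).
  by apply: mulr_ge0; [lra | apply: mulr_ge0; [lra| nra]].
nra.
Qed.

End Mx.
Definition Per {R : realType} {n : nat} {S : Type} (A : set S)
  {V : normedModType R[i]} (g : 'rV[R]_n -> S -> V) (e : R) (tau : 'rV[R]_n) :=
  forall t s, A s -> complex.Re `|g (t + tau) s - g t s| <= e.

Definition APf {R : realType} {n : nat} {S : Type} (A : set S)
  {V : normedModType R[i]} (g : 'rV[R]_n -> S -> V) :=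
  forall e : R, 0 < e -> exists l : R, 0 < l /\ forall t0, exists tau,
    `|tau - t0| <= l /\ Per A g e tau.

Definition UCf {R : realType} {n : nat} {S : Type} (A : set S)
  {V : normedModType R[i]} (g : 'rV[R]_n -> S -> V) :=
  forall e : R, 0 < e -> exists d : R, 0 < d /\ forall t t' s, A s ->
    `|t - t'| < d -> complex.Re `|g t s - g t' s| <= e.

From mathcomp Require Import lra.
Section Gen.
Context {R : realType}.
Context {n : nat}.

Lemma PerN {S} {A : set S} {V : normedModType R[i]} {g : 'rV[R]_n -> S -> V} {e tau} :
  Per A g e tau -> Per A g e (- tau).
Proof.
move=> H t s As; have := H (t - tau) s As.
by rewrite subrK nr_distC.
Qed.

Lemma PerD {S} {A : set S} {V : normedModType R[i]} {g : 'rV[R]_n -> S -> V} {e1 e2 a b} :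
  Per A g e1 a -> Per A g e2 b -> Per A g (e1 + e2) (a + b).
Proof.
move=> Ha Hb t s As; have h1 := Ha (t + b) s As; have h2 := Hb t s As.
rewrite (addrC a b) addrA.
have h3 := nr_B (g (t + b + a) s) (g (t + b) s) (g t s).
exact: (le_trans h3 (lerD h1 h2)).
Qed.

Lemma seq_upper (T : eqType) (P : T -> R -> Prop) (s : seq T) :
  (forall y, y \in s -> exists L, forall L', L <= L' -> P y L') ->
  exists L, forall y, y \in s -> forall L', L <= L' -> P y L'.
Proof.
elim: s => [|a s IH] H; first by exists 0 => y; rewrite in_nil.
have [La Ha] := H a (mem_head _ _).
have [Ls Hs] := IH (fun y ys => H y ltac:(by rewrite in_cons ys orbT)).
exists (Num.max La Ls) => y; rewrite in_cons => /orP[/eqP -> | ys] L' hL'.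
  by apply: Ha; apply: le_trans hL'; rewrite le_max lexx.
by apply: Hs => //; apply: le_trans hL'; rewrite le_max lexx orbT.
Qed.

Lemma seq_lower (T : eqType) (P : T -> R -> Prop) (s : seq T) :
  (forall y, y \in s -> exists d, 0 < d /\ forall d', 0 < d' -> d' <= d -> P y d') ->
  exists d, 0 < d /\ forall y, y \in s -> forall d', 0 < d' -> d' <= d -> P y d'.
Proof.
elim: s => [|a s IH] H; first by exists 1; split => // y; rewrite in_nil.
have [da [da0 Ha]] := H a (mem_head _ _).
have [ds [ds0 Hs]] := IH (fun y ys => H y ltac:(by rewrite in_cons ys orbT)).
exists (Num.min da ds); split; first by rewrite lt_min da0 ds0.
move=> y; rewrite in_cons => /orP[/eqP -> | ys] d' d'0 hd'.
  by apply: Ha => //; move: hd'; rewrite le_min => /andP[].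
by apply: Hs => //; move: hd'; rewrite le_min => /andP[].
Qed.

Lemma compact_nr_bounded (V : normedModType R[i]) (A : set V) :
  compact A -> exists M : R, forall y, A y -> complex.Re `|y| <= M.
Proof.
rewrite compact_cover => Ac.
have cov : A `<=` \bigcup_(k in [set: nat]) ball (0:V) (k%:R).
  move=> y _; exists (Num.truncn (complex.Re `|y|)).+1 => //.
  rewrite -ball_normE /ball_ /= sub0r normrN normE.
  rewrite -(rmorph_nat (@real_complex_def R (Phant R))) ltcR.
  exact: truncnS_gt.
have [D' _ cov'] := Ac _ _ _ (fun k _ => ball_open _ _) cov.
have [L HL] := @seq_upper _ (fun k L => k%:R <= L) (finmap.enum_fset D')
   (fun k _ => ex_intro _ (k%:R) (fun L' h => h)).
exists L => y /cov' [k kD' yk].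
move: yk; rewrite -ball_normE /ball_ /= sub0r normrN normE.
rewrite -(rmorph_nat (@real_complex_def R (Phant R))) ltcR => yk.
by apply: ltW; apply: lt_le_trans yk _; apply: HL.
Qed.

End Gen.
From mathcomp Require Import lra.
Section Heine.
Context {R : realType} {n : nat}.

Lemma ball_rV (x y : 'rV[R]_n) e : ball x e y = (`|x - y| < e).
Proof. by rewrite -ball_normE. Qed.

Lemma ball_V {V : normedModType R[i]} (x y : V) e : ball x e y = (`|x - y| < e).
Proof. by rewrite -ball_normE. Qed.

Lemma heine {V : normedModType R[i]} (h : 'rV[R]_n -> V) : continuous h ->
  forall r e, 0 < e -> exists d, 0 < d /\ forall y z, `|y| <= r ->
    `|y - z| < d -> complex.Re `|h y - h z| <= e.
Proof.
move=> hc r e e0.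
pose r' := Num.max r 1.
have r'0 : 0 < r' by rewrite lt_max ltr01 orbT.
pose K := closed_ball (0 : 'rV[R]_n) r'.
have KE : forall y, `|y| <= r -> K y.
  move=> y hy; rewrite /K closed_ballE // /closed_ball_ /= sub0r normrN.
  by apply: le_trans hy _; rewrite le_max lexx.
have Kc : compact K.
  apply: bounded_closed_compact; last exact: closed_ball_closed.
  rewrite /K closed_ballE //; rewrite /bounded_set /=.
  rewrite /bounded_near; near=> M; move=> y; rewrite /closed_ball_ /= sub0r normrN => hy.
  apply: le_trans hy _; near: M; apply: nbhs_pinfty_ge; exact: num_real.
pose D := [set p : 'rV[R]_n * R | K p.1 /\ 0 < p.2 /\ forall z,
  `|p.1 - z| < p.2 *+ 2 -> complex.Re `|h p.1 - h z| <= e / 2].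
pose f := fun p : 'rV[R]_n * R => ball p.1 p.2.
have cov : K `<=` \bigcup_(p in D) f p.
  move=> y Ky.
  have e2 : 0 < (e / 2)%:C%C :> R[i] by rewrite ltcR; apply: divr_gt0.
  have := pseudometric_normed_Zmodule.cvgr_dist_lt _ _ (hc y) _ e2.
  move=> /(_ _) /nbhs_ballP [d /= d0 Hd].
  exists (y, d / 2); last by rewrite /f /=; apply: ballxx; apply: divr_gt0.
  split; first exact: Ky.
  split; first by apply: divr_gt0.
  move=> z /= hz.
  have : ball y d z by rewrite ball_rV; move: hz; rewrite /= mulr2n -splitr.
  by move/Hd => /=; rewrite nr_lt => /ltW.
have [D' D'D Kcov] : finite_subset_cover D f K.
  by move: Kc; rewrite compact_cover; apply => // p _; exact: ball_open.
have D'D' : forall p, p \in finmap.enum_fset D' -> D p.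
  by move=> p pD; apply: set_mem; exact: D'D.
have [d [d0 Hd]] := @seq_lower _ _ (fun p d => d <= p.2) (finmap.enum_fset D')
  (fun p pD => ex_intro _ p.2 (conj (proj1 (proj2 (D'D' p pD))) (fun d' _ h => h))).
exists d; split => // y z /KE Ky hyz.
have [p pD' yp] := Kcov y Ky.
have [Kp [p0 Hp]] := D'D' p pD'.
move: yp; rewrite /f ball_rV => yp.
have dp : d <= p.2 := Hd p pD' d d0 (lexx d).
have hz : `|p.1 - z| < p.2 *+ 2.
  have := ler_normD (p.1 - y) (y - z); rewrite addrA subrK => h1.
  by apply: le_lt_trans h1 _; rewrite mulr2n; apply: ltrD => //; apply: lt_le_trans hyz dp.
have hy2 : `|p.1 - y| < p.2 *+ 2 by rewrite mulr2n; apply: lt_le_trans yp _; rewrite lerDl ltW.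
have h1 := Hp y hy2; have h2 := Hp z hz.
have h3 := nr_B (h y) (h p.1) (h z).
have h4 := nr_distC (h y) (h p.1).
lra.
Unshelve. all: by end_near.
Qed.

End Heine.

Section CB.
Context {R : realType} {n : nat}.

Lemma cb_mem (r : R) (y : 'rV[R]_n) : 0 < r -> `|y| <= r -> closed_ball 0 r y.
Proof. by move=> r0 hy; rewrite closed_ballE // /closed_ball_ /= sub0r normrN. Qed.

Lemma cb_compact (r : R) : 0 < r -> compact (closed_ball (0 : 'rV[R]_n) r).
Proof.
move=> r0.
apply: bounded_closed_compact; last exact: closed_ball_closed.
rewrite closed_ballE //; rewrite /bounded_set /=.
rewrite /bounded_near; near=> M; move=> y; rewrite /closed_ball_ /= sub0r normrN => hy.
apply: le_trans hy _; near: M; apply: nbhs_pinfty_ge; exact: num_real.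
Unshelve. all: by end_near.
Qed.

End CB.
From mathcomp Require Import ring lra.
Section Main.
Context {R : realType} {n : nat}.

Lemma AP_UC {V : normedModType R[i]} (h : 'rV[R]_n -> V) :
  continuous h -> APf (@setT unit) (fun t _ => h t) -> UCf (@setT unit) (fun t _ => h t).
Proof.
move=> hc hap e e0.
have e3 : 0 < e / 3 by apply: divr_gt0.
have [l [l0 Hl]] := hap _ e3.
have [d [d0 Hd]] := heine _ hc l _ e3.
exists d; split => // t t' s _ htt'.
have [tau [htau Ptau]] := Hl (- t).
rewrite opprK addrC in htau.
have h1 := Ptau t tt I; have h2 := Ptau t' tt I.
have e1 : (t + tau) - (t' + tau) = t - t' by rewrite opprD addrACA subrr addr0.
have h3 := Hd (t + tau) (t' + tau) htau ltac:(by rewrite e1).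
have h4 := nr_B (h t) (h (t + tau)) (h t').
have h5 := nr_B (h (t + tau)) (h (t' + tau)) (h t').
have h6 := nr_distC (h t) (h (t + tau)).
simpl in *.
lra.
Qed.

Lemma AP_bounded {S : Type} (A : set S) {V : normedModType R[i]}
    (g : 'rV[R]_n -> S -> V) :
  APf A g -> (forall r, exists M, forall t s, `|t| <= r -> A s ->
    complex.Re `|g t s| <= M) ->
  exists M, forall t s, A s -> complex.Re `|g t s| <= M.
Proof.
move=> hap hloc.
have [l [l0 Hl]] := hap 1 ltr01.
have [M HM] := hloc l.
exists (M + 1) => t s As.
have [tau [htau Ptau]] := Hl (- t).
rewrite opprK addrC in htau.
have h1 := HM _ s htau As.
have h2 := Ptau t s As.
have h3 := nr_D (g (t + tau) s) (g t s - g (t + tau) s).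
rewrite addrC subrK in h3.
have h4 := nr_distC (g t s) (g (t + tau) s).
lra.
Qed.

Lemma common {S1 : Type} (A1 : set S1) {V1 : normedModType R[i]}
    (g1 : 'rV[R]_n -> S1 -> V1)
    {S2 : Type} (A2 : set S2) {V2 : normedModType R[i]}
    (g2 : 'rV[R]_n -> S2 -> V2) :
  APf A1 g1 -> APf A2 g2 -> UCf A2 g2 ->
  forall e, 0 < e -> exists l, 0 < l /\ forall t0, exists tau,
    `|tau - t0| <= l /\ Per A1 g1 e tau /\ Per A2 g2 e tau.
Proof.
move=> ap1 ap2 uc2 e e0.
have [l1 [l10 H1]] := ap1 (e / 2) ltac:(lra).
have [l2 [l20 H2]] := ap2 (e / 3) ltac:(lra).
have [d [d0 Hd]] := uc2 (e / 3) ltac:(lra).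
have l120 : 0 < l1 + l2 by apply: addr_gt0.
have d20 : 0 < d / 2 by apply: divr_gt0.
pose K := closed_ball (0 : 'rV[R]_n) (l1 + l2).
have Kc : compact K by apply: cb_compact.
have [D' _ Kcov] : finite_subset_cover [set: 'rV[R]_n] (fun y => ball y (d / 2)) K.
  move: Kc; rewrite compact_cover; apply => [y _|y _]; first exact: ball_open.
  by exists y => //; apply: ballxx.
pose P y (L : R) := (exists t1 t2, Per A1 g1 (e / 2) t1 /\ Per A2 g2 (e / 3) t2 /\
      ball y (d / 2) (t1 - t2)) ->
   exists t1 t2, Per A1 g1 (e / 2) t1 /\ Per A2 g2 (e / 3) t2 /\ `|t1| <= L /\
      ball y (d / 2) (t1 - t2).
have [L HL] : exists L, forall y, y \in finmap.enum_fset D' -> forall L', L <= L' -> P y L'.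
  apply: seq_upper => y _.
  case: (pselect (exists t1 t2, Per A1 g1 (e / 2) t1 /\ Per A2 g2 (e / 3) t2 /\
      ball y (d / 2) (t1 - t2))) => [[t1 [t2 [p1 [p2 b]]]] | nex].
    exists `|t1| => L' hL' _; exists t1, t2; split => //; split => //.
  by exists 0 => L' _ hex; exfalso; apply: nex.
exists (l1 + `|L|); split; first by have := normr_ge0 L; lra.
move=> t0.
have [t1 [h1 p1]] := H1 t0; have [t2 [h2 p2]] := H2 t0.
have dK : K (t1 - t2).
  apply: cb_mem => //.
  have -> : t1 - t2 = (t1 - t0) + (t0 - t2) by rewrite addrA subrK.
  apply: le_trans (ler_normD _ _) _; rewrite (distrC t0).
  by apply: lerD.
have [y yD' yb] := Kcov _ dK.
have [t1' [t2' [p1' [p2' [hL' b']]]]] :=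
  HL y yD' L (lexx L) (ex_intro _ t1 (ex_intro _ t2 (conj p1 (conj p2 yb)))).
exists (t1 - t1'); split; [|split].
- have -> : t1 - t1' - t0 = (t1 - t0) + (- t1') by rewrite addrAC.
  apply: le_trans (ler_normD _ _) _; rewrite normrN.
  have := ler_norm L; lra.
- by have := PerD p1 (PerN p1'); rewrite -splitr.
- move=> t s As.
  have q1 := PerD p2 (PerN p2') t s As.
  have hb : `|(t + (t1 - t1')) - (t + (t2 - t2'))| < d.
    have -> : (t + (t1 - t1')) - (t + (t2 - t2')) = ((t1 - t2) - y) + (y - (t1' - t2')).
      by apply/rowP => i; rewrite !mxE; ring.
    apply: le_lt_trans (ler_normD _ _) _; rewrite (distrC _ y).
    move: yb b'; rewrite !ball_rV => yb b'.
    by rewrite (splitr d); apply: ltrD.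
  have q2 := Hd _ _ s As hb.
  have q3 := nr_B (g2 (t + (t1 - t1')) s) (g2 (t + (t2 - t2')) s) (g2 t s).
  lra.
Qed.

End Main.
From mathcomp Require Import lra.
Theorem proposition2p19 (R : realType) (n : nat)
    (X Y : completeNormedModType R[i]) (BB : set (set X))
    (f : 'rV[R]_n -> R[i]) (F : 'rV[R]_n * X -> Y) :
  (forall B, BB B -> compact B) ->
  (forall x : X, exists2 B, BB B & B x) ->
  bohr_ap f -> bohr_B_ap BB F ->
  bohr_B_ap BB (fun tx : 'rV[R]_n * X => f tx.1 *: F tx).
Proof.
move=> Bc _ [fc fap] [Fc Fap]; split.
  move=> tx; apply: continuousZ; last exact: Fc.
  by apply: cvg_comp; [exact: cvg_fst | exact: fc].
move=> B BBB e e0.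
pose g1 := fun t x => F (t, x).
pose g2 := fun t (_ : unit) => f t.
have ap1 : APf B g1.
  move=> eps eps0; have [l [l0 Hl]] := Fap B BBB eps eps0.
  exists l; split => // t0; have [tau [h1 h2]] := Hl t0.
  exists tau; split; first exact: le_trans (mx_le_eucl _) h1.
  by move=> t x Bx; rewrite -nr_le; exact: h2.
have ap2 : APf (@setT unit) g2.
  move=> eps eps0; have [l [l0 Hl]] := fap eps eps0.
  exists l; split => // t0; have [tau [h1 h2]] := Hl t0.
  exists tau; split; first exact: le_trans (mx_le_eucl _) h1.
  by move=> t x _; rewrite -nr_le; exact: h2.
have uc2 := AP_UC _ fc ap2.
have [MF HMF] : exists M, forall t x, B x -> complex.Re `|g1 t x| <= M.
  apply: AP_bounded ap1 _ => r.
  pose r' := Num.max r 1.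
  have r'0 : 0 < r' by rewrite lt_max ltr01 orbT.
  have Kc : compact (F @` (closed_ball (0 : 'rV[R]_n) r' `*` B)).
    apply: continuous_compact; first exact: continuous_subspaceT.
    by apply: compact_setX; [exact: cb_compact | exact: Bc BBB].
  have [M HM] := compact_nr_bounded _ _ Kc.
  exists M => t x ht Bx; apply: HM; exists (t, x) => //; split => //=.
  by apply: cb_mem => //; apply: le_trans ht _; rewrite le_max lexx.
have [Mf HMf] : exists M, forall t (u : unit), setT u -> complex.Re `|g2 t u| <= M.
  apply: AP_bounded ap2 _ => r.
  pose r' := Num.max r 1.
  have r'0 : 0 < r' by rewrite lt_max ltr01 orbT.
  have Kc : compact (f @` (closed_ball (0 : 'rV[R]_n) r')).
    apply: continuous_compact; first exact: continuous_subspaceT.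
    exact: cb_compact.
  have [M HM] := compact_nr_bounded _ _ Kc.
  exists M => t x ht _; apply: HM; exists t => //.
  by apply: cb_mem => //; apply: le_trans ht _; rewrite le_max lexx.
pose C := `|MF| + `|Mf| + 1.
have C0 : 0 < C by rewrite /C; have := normr_ge0 MF; have := normr_ge0 Mf; lra.
pose eta := e / C.
have eta0 : 0 < eta by apply: divr_gt0.
have [l [l0 Hl]] := common _ _ _ _ ap1 ap2 uc2 _ eta0.
exists (n%:R * l + 1); split.
  have : 0 <= n%:R * l by apply: mulr_ge0 => //; apply: ltW.
  lra.
move=> t0; have [tau [h1 [p1 p2]]] := Hl t0.
exists tau; split.
  apply: le_trans (eucl_le_mx _) _.
  have : n%:R * `|tau - t0| <= n%:R * l by apply: ler_wpM2l.
  lra.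
move=> t x Bx /=; rewrite nr_le.
set a := f (t + tau); set b := f t; set u := F (t + tau, x); set v := F (t, x).
have -> : a *: u - b *: v = (a - b) *: u + b *: (u - v).
  by rewrite scalerBl scalerBr addrA subrK.
apply: le_trans (nr_D _ _) _; rewrite !nr_Z.
have q1 : complex.Re `|a - b| <= eta := p2 t tt I.
have q2 : complex.Re `|u - v| <= eta := p1 t x Bx.
have q3 : complex.Re `|u| <= `|MF| := le_trans (HMF _ x Bx) (ler_norm _).
have q4 : complex.Re `|b| <= `|Mf| := le_trans (HMf t tt I) (ler_norm _).
have r1 := nr_ge0 (a - b); have r2 := nr_ge0 u; have r3 := nr_ge0 b; have r4 := nr_ge0 (u - v).
have s1 : complex.Re `|a - b| * complex.Re `|u| <= eta * `|MF| by apply: ler_pM.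
have s2 : complex.Re `|b| * complex.Re `|u - v| <= `|Mf| * eta by apply: ler_pM.
have eC : eta * C = e by rewrite /eta divfK // gt_eqF.
have := normr_ge0 MF; have := normr_ge0 Mf.
rewrite /C in eC.
nra.
Qed.
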